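(* Let $S$ be an investment strategy with parameter space $\mathbb W=\mathcal W_k^\ell$ satisfying conditions $(\mathrm L_\varepsilon)$ and $(\mathrm D_c)$, let $c'=\frac{2c}{\varepsilon}$, let $\sigma>0$, $\Gamma\ge2$, and $0<\nu\le2$. Define $\delta'_t(\nu)=\frac{\nu}{3\Gamma c'mt^4k\ell}$. Then there is $t_0$ (depending only on $\nu,c',m$) such that for all $t\ge t_0$, every market sequence, and all $\mathbf w,\mathbf w'\in\mathbb W$ with $|w_{ij}-w'_{ij}|\le\delta'_t(\nu)$ for all $1\le i\le\ell$, $1\le j\le k$: $(1+\nu)^{-1}F_t(\mathbf w)\le F_t(\mathbf w')\le(1+\nu)F_t(\mathbf w)$.
   Context: Let $m\ge2$ and $\mathbf x_0,\mathbf x_1,\dots\in(0,\infty)^m$ be return vectors. $\mathcal W_k=\{\mathbf w\in[0,1]^k:\sum_i w_i=1\}$. An investment strategy $S$ with parameter space $\mathbb W=\mathcal W_k^\ell$ (elements $\mathbf w=(\mathbf w_1,\dots,\mathbf w_\ell)$, $\mathbf w_i=(w_{i1},\dots,w_{ik})$) assigns to each $t\ge0$, $\mathbf w$ a description $S_t(\mathbf w)\in\mathcal W_m$; $\mathcal R_t(\mathbf w)=\prod_{s=0}^{t-1}S_s(\mathbf w)\cdot\mathbf x_s$. Damped return: $f_{ij}(\mathbf w)=e^{\Gamma\min(w_{ij}-\sigma,0)}$ and $F_t(\mathbf w)=\mathcal R_t(\mathbf w)\prod_{i=1}^\ell\prod_{j=1}^k f_{ij}(\mathbf w)$. Condition $(\mathrm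 L_\varepsilon)$: $S_{ti}(\mathbf w)\ge\frac{\varepsilon}{2m(t+1)^2}$ for all $t,i,\mathbf w$ (with fixed $\varepsilon\in(0,1)$). Condition $(\mathrm D_c)$: for all $t\ge0$, $1\le i\le m$, $\mathbf w,\mathbf w'\in\mathbb W$, $|S_{ti}(\mathbf w)-S_{ti}(\mathbf w')|\le c(t+1)\sum_{\iota=1}^\ell\sum_{j=1}^{k-1}|w_{\iota j}-w'_{\iota j}|$. *)

(* Defs.v *)
(* concrete reals R. Indices are 0-based naturals. *)
From Stdlib Require Import Reals.
Open Scope R_scope.

Fixpoint sumR (n : nat) (f : nat -> R) : R :=
  match n with O => 0 | S n' => sumR n' f + f n' end.
Fixpoint prodR (n : nat) (f : nat -> R) : R :=
  match n with O => 1 | S n' => prodR n' f * f n' end.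

Definition in_simplex (k : nat) (v : nat -> R) : Prop :=
  (forall j, (j < k)%nat -> 0 <= v j <= 1) /\ sumR k v = 1.

(* parameter w = (w_1,...,w_l), w i j = w_{(i+1)(j+1)}; w in W = W_k^l *)
Definition in_param (k l : nat) (w : nat -> nat -> R) : Prop :=
  forall i, (i < l)%nat -> in_simplex k (w i).

(* A strategy: S t w i is the i-th coordinate of S_t(w). *)
Definition strategy := nat -> (nat -> nat -> R) -> nat -> R.

Definition is_strategy (m k l : nat) (S : strategy) : Prop :=
  forall t w, in_param k l w -> in_simplex m (S t w).

Definition is_market (m : nat) (x : nat -> nat -> R) : Prop :=
  forall s i, (i < m)%nat -> 0 < x s i.

Definition wealth (m : nat) (S : strategy) (x : nat -> nat -> R) (t : nat)
  (w : nat -> nat -> R) : R :=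
  prodR t (fun s => sumR m (fun i => S s w i * x s i)).

Definition damp (Gamma sigma : R) (w : nat -> nat -> R) (i j : nat) : R :=
  exp (Gamma * Rmin (w i j - sigma) 0).

Definition damped_return (m k l : nat) (Gamma sigma : R) (S : strategy)
  (x : nat -> nat -> R) (t : nat) (w : nat -> nat -> R) : R :=
  wealth m S x t w * prodR l (fun i => prodR k (fun j => damp Gamma sigma w i j)).

Definition cond_L (m k l : nat) (eps : R) (S : strategy) : Prop :=
  forall t i w, (i < m)%nat -> in_param k l w ->
    eps / (2 * INR m * (INR t + 1) ^ 2) <= S t w i.

(* condition (D_c); the inner sum ranges over j = 1..k-1 (0-based: j < k-1) *)
Definition cond_D (m k l : nat) (c : R) (S : strategy) : Prop :=
  forall t i w w', (i < m)%nat -> in_param k l w -> in_param k l w' ->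
    Rabs (S t w i - S t w' i) <=
      c * (INR t + 1) * sumR l (fun io => sumR (k - 1) (fun j => Rabs (w io j - w' io j))).

Definition delta' (nu Gamma c' : R) (m k l t : nat) : R :=
  nu / (3 * Gamma * c' * INR m * INR t ^ 4 * INR k * INR l).

(* Main.v *)
Require Import Defs.
From Stdlib Require Import Reals Lra Lia.
Open Scope R_scope.

Lemma exp_le x y : x <= y -> exp x <= exp y.
Proof. intros [H|H]; [left; apply exp_increasing; auto | subst; lra]. Qed.

Lemma sumR_le n f g : (forall j, (j<n)%nat -> f j <= g j) -> sumR n f <= sumR n g.
Proof. induction n; simpl; intros H; [lra|]. pose proof (H n ltac:(lia)).
  assert (sumR n f <= sumR n g) by (apply IHn; intros; apply H; lia). lra. Qed.

Lemma sumR_scal n a f : sumR n (fun j => a * f j) = a * sumR n f.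
Proof. induction n; simpl; [ring|]. rewrite IHn; ring. Qed.

Lemma sumR_const_le n f a : (forall j,(j<n)%nat -> f j <= a) -> sumR n f <= INR n * a.
Proof. induction n; simpl sumR; intros H; [simpl; lra|]. rewrite S_INR.
  pose proof (H n ltac:(lia)).
  assert (sumR n f <= INR n * a) by (apply IHn; intros; apply H; lia). lra. Qed.

Lemma sumR_nonneg n f : (forall j, (j<n)%nat -> 0 <= f j) -> 0 <= sumR n f.
Proof. induction n; simpl; intros H; [lra|]. pose proof (H n ltac:(lia)).
  assert (0 <= sumR n f) by (apply IHn; intros; apply H; lia). lra. Qed.

Lemma prodR_nonneg n f : (forall j, (j<n)%nat -> 0 <= f j) -> 0 <= prodR n f.
Proof. induction n; simpl; intros H; [lra|]. pose proof (H n ltac:(lia)).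
  assert (0 <= prodR n f) by (apply IHn; intros; apply H; lia).
  apply Rmult_le_pos; auto. Qed.

Lemma prodR_le n f g : (forall j, (j<n)%nat -> 0 <= f j <= g j) -> prodR n f <= prodR n g.
Proof. induction n; simpl; intros H; [lra|]. pose proof (H n ltac:(lia)).
  assert (prodR n f <= prodR n g) by (apply IHn; intros; apply H; lia).
  assert (0 <= prodR n f) by (apply prodR_nonneg; intros; apply H; lia).
  apply Rmult_le_compat; lra. Qed.

Lemma prodR_mul n a f : prodR n (fun j => a * f j) = a^n * prodR n f.
Proof. induction n; simpl; [ring|]. rewrite IHn; ring. Qed.

Lemma exp_pow x n : exp x ^ n = exp (INR n * x).
Proof. induction n; simpl pow. simpl; rewrite Rmult_0_l, exp_0; ring.
  rewrite IHn, S_INR, <- exp_plus. f_equal. ring. Qed.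

Lemma Rmin_lip a b : Rmin a 0 - Rmin b 0 <= Rabs (a - b).
Proof. pose proof (Rle_abs (a-b)); pose proof (Rabs_pos (a-b)).
  unfold Rmin; destruct (Rle_dec a 0); destruct (Rle_dec b 0); lra. Qed.

Lemma exp_third nu : 0 < nu <= 2 -> exp (nu/3) <= 1 + nu.
Proof. intros Hn. set (y := 1 - nu/3).
  assert (Hy : y <= exp (- (nu/3))) by (pose proof (exp_ineq1_le (-(nu/3))); unfold y; lra).
  assert (0 < y) by (unfold y; lra).
  replace (exp (nu/3)) with (/ exp (-(nu/3))) by (rewrite exp_Ropp, Rinv_inv; auto).
  apply Rle_trans with (/ y). apply Rinv_le_contravar; auto.
  apply (Rmult_le_reg_l y); auto. rewrite Rinv_r by lra. unfold y; nra. Qed.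

Lemma one_side m nu c' eps c k l sigma Gamma S t x w w' :
  (2<=m)%nat -> 0<nu<=2 -> 0<c' -> 0<eps<1 -> 0<c -> c' = 2*c/eps -> 0<sigma -> 2<=Gamma ->
  is_strategy m k l S -> cond_L m k l eps S -> cond_D m k l c S -> (1<=t)%nat ->
  1 <= c' * INR t -> is_market m x -> in_param k l w -> in_param k l w' ->
  (forall i j, (i < l)%nat -> (j < k)%nat ->
             Rabs (w i j - w' i j) <= delta' nu Gamma c' m k l t) ->
  damped_return m k l Gamma sigma S x t w' <= (1+nu) * damped_return m k l Gamma sigma S x t w.
Proof.
  intros Hm Hnu Hc' Heps Hc Hc'e Hsig HG HS HL HD Ht Hct Hx Hw Hw' Hww.
  set (dl := delta' nu Gamma c' m k l t) in *.
  set (M := INR m). set (T := INR t). set (K := INR k). set (L := INR l).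
  assert (HM : 2 <= M) by (unfold M; change 2 with (INR 2); apply le_INR; auto).
  assert (HT : 1 <= T) by (unfold T; change 1 with (INR 1); apply le_INR; auto).
  fold T in Hct. assert (HK : 0 <= K) by apply pos_INR. assert (HLL : 0 <= L) by apply pos_INR.
  assert (HT3 : 1 <= T^3) by (apply pow_R1_Rle; auto).
  assert (HT4 : T^4 = T * T^3) by ring.
  assert (Hdl0 : 0 <= dl).
  { unfold dl, delta'. fold M T K L.
    set (den := 3 * Gamma * c' * M * T ^ 4 * K * L).
    destruct (Req_dec den 0) as [E|E].
    - unfold Rdiv; rewrite E, Rinv_0; lra.
    - assert (0 <= den) by (unfold den; repeat apply Rmult_le_pos; try lra; apply pow_le; lra).
      unfold Rdiv; apply Rmult_le_pos; [lra|left; apply Rinv_0_lt_compat; lra]. }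
  set (D := L * K * dl).
  assert (HD0 : 0 <= D).
  { unfold D. apply Rmult_le_pos; [apply Rmult_le_pos|]; lra. }
  assert (Hkey : c' * M * T^4 * D <= nu/6 /\ Gamma * D <= nu/6).
  { destruct (Req_dec (K*L) 0) as [E|E].
    - assert (D = 0) by (unfold D; replace (L*K*dl) with ((K*L)*dl) by ring; rewrite E; ring).
      rewrite H; lra.
    - assert (0 < K) by (destruct HK as [?|HK0]; auto; rewrite <- HK0 in E; lra).
      assert (0 < L) by (destruct HLL as [?|HL0]; auto; rewrite <- HL0 in E; lra).
      assert (Hc4 : 2 <= c' * M * T^4).
      { rewrite HT4. replace (c' * M * (T * T^3)) with ((c' * T) * M * T^3) by ring.
        replace 2 with (1*2*1) by ring.
        apply Rmult_le_compat; try lra.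
        apply Rmult_le_compat. all: lra. }
      assert (HDv : D = nu / (3 * Gamma * (c' * M * T^4))).
      { unfold D, dl, delta'. fold M T K L. field. repeat split; try lra.
        all: try (apply pow_nonzero; lra). }
      split.
      + rewrite HDv. replace (c' * M * T ^ 4 * (nu / (3 * Gamma * (c' * M * T ^ 4))))
          with (nu / (3*Gamma)) by (field; split; lra).
        unfold Rdiv; apply Rmult_le_compat_l; [lra|]. apply Rinv_le_contravar; lra.
      + rewrite HDv. replace (Gamma * (nu / (3 * Gamma * (c' * M * T ^ 4))))
          with (nu / (3*(c' * M * T ^ 4))) by (field; split; lra).
        unfold Rdiv; apply Rmult_le_compat_l; [lra|]. apply Rinv_le_contravar; lra. }
  destruct Hkey as [Hk1 Hk2].
  assert (Hdiff : forall s i, (i < m)%nat -> Rabs (S s w i - S s w' i) <= c * (INR s + 1) * D).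
  { intros s i Hi. eapply Rle_trans. apply HD; auto.
    assert (0 <= INR s) by apply pos_INR.
    apply Rmult_le_compat_l. apply Rmult_le_pos; lra.
    apply Rle_trans with (L * (K * dl)); [|unfold D; lra].
    apply sumR_const_le. intros io Hio.
    apply Rle_trans with (INR (k-1) * dl).
    apply sumR_const_le. intros j Hj. apply Hww; lia.
    apply Rmult_le_compat_r; auto. apply le_INR; lia. }
  set (A := c' * M * T^3 * D).
  assert (HA0 : 0 <= A) by (unfold A; apply Rmult_le_pos; [|exact HD0]; apply Rmult_le_pos; [|apply pow_le; lra]; apply Rmult_le_pos; lra).
  assert (HSnn : forall s v i, in_param k l v -> (i < m)%nat -> 0 <= S s v i).
  { intros s v i Hv Hi. destruct (HS s v Hv) as [H1 _]. apply (H1 i Hi). }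
  assert (Hfac : forall s, (s < t)%nat ->
     sumR m (fun i => S s w' i * x s i) <= (1+A) * sumR m (fun i => S s w i * x s i)).
  { intros s Hs. rewrite <- sumR_scal. apply sumR_le. intros i Hi.
    pose proof (HL s i w Hi Hw) as Lb. fold M in Lb. pose proof (Hx s i Hi) as hx.
    set (u := INR s + 1) in *.
    assert (Hu1 : 1 <= u) by (unfold u; pose proof (pos_INR s); lra).
    assert (HuT : u <= T) by (unfold u, T; rewrite <- S_INR; apply le_INR; lia).
    assert (Hcl : c * u * D <= A * S s w i).
    { apply Rle_trans with (A * (eps / (2 * M * u ^ 2))).
      2:{ apply Rmult_le_compat_l; auto. }
      replace (A * (eps / (2 * M * u ^ 2))) with ((c * D) * (T^3 / u^2)).
      2:{ unfold A. rewrite Hc'e. field. repeat split; try lra; try (apply pow_nonzero; lra). }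
      replace (c * u * D) with ((c*D) * (u^3/u^2)) by (field; lra).
      apply Rmult_le_compat_l. apply Rmult_le_pos; lra.
      unfold Rdiv; apply Rmult_le_compat_r. left; apply Rinv_0_lt_compat, pow_lt; lra.
      apply pow_incr; lra. }
    assert (S s w' i - S s w i <= Rabs (S s w i - S s w' i))
      by (rewrite Rabs_minus_sym; apply Rle_abs).
    pose proof (Hdiff s i Hi). fold u in H0.
    assert (S s w' i <= (1+A) * S s w i) by lra.
    replace ((1+A) * (S s w i * x s i)) with (((1+A) * S s w i) * x s i) by ring.
    apply Rmult_le_compat_r; lra. }
  assert (Hwealth : wealth m S x t w' <= (1+A)^t * wealth m S x t w).
  { unfold wealth. rewrite <- prodR_mul. apply prodR_le. intros s Hs. split.
    apply sumR_nonneg; intros i Hi. apply Rmult_le_pos; [apply HSnn; auto|left; apply Hx; auto].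
    apply Hfac; auto. }
  assert (Hw0 : 0 <= wealth m S x t w').
  { unfold wealth. apply prodR_nonneg. intros s Hs.
    apply sumR_nonneg; intros i Hi. apply Rmult_le_pos; [apply HSnn; auto|left; apply Hx; auto]. }
  assert (HwW : 0 <= wealth m S x t w).
  { unfold wealth. apply prodR_nonneg. intros s Hs.
    apply sumR_nonneg; intros i Hi. apply Rmult_le_pos; [apply HSnn; auto|left; apply Hx; auto]. }
  set (E := exp (Gamma * dl)).
  assert (Hdamp : forall i j, (i < l)%nat -> (j < k)%nat ->
     damp Gamma sigma w' i j <= E * damp Gamma sigma w i j).
  { intros i j Hi Hj. unfold damp, E. rewrite <- exp_plus. apply exp_le.
    pose proof (Rmin_lip (w' i j - sigma) (w i j - sigma)).
    replace (w' i j - sigma - (w i j - sigma)) with (-(w i j - w' i j)) in H by ring.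
    rewrite Rabs_Ropp in H. pose proof (Hww i j Hi Hj).
    assert (Gamma * (Rmin (w' i j - sigma) 0 - Rmin (w i j - sigma) 0) <= Gamma * dl)
      by (apply Rmult_le_compat_l; lra). lra. }
  assert (Hdp : prodR l (fun i => prodR k (fun j => damp Gamma sigma w' i j))
             <= (E^k)^l * prodR l (fun i => prodR k (fun j => damp Gamma sigma w i j))).
  { rewrite <- prodR_mul. apply prodR_le. intros i Hi. split.
    apply prodR_nonneg; intros; left; apply exp_pos.
    rewrite <- prodR_mul. apply prodR_le. intros j Hj. split. left; apply exp_pos.
    apply Hdamp; auto. }
  assert (HP0 : 0 <= prodR l (fun i => prodR k (fun j => damp Gamma sigma w i j)))
    by (apply prodR_nonneg; intros; apply prodR_nonneg; intros; left; apply exp_pos).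
  assert (HP0' : 0 <= prodR l (fun i => prodR k (fun j => damp Gamma sigma w' i j)))
    by (apply prodR_nonneg; intros; apply prodR_nonneg; intros; left; apply exp_pos).
  assert (Hcoef : (1+A)^t * (E^k)^l <= 1 + nu).
  { assert (H1 : (1+A)^t <= exp (nu/6)).
    { apply Rle_trans with (exp A ^ t). apply pow_incr. pose proof (exp_ineq1_le A); lra.
      rewrite exp_pow. apply exp_le. fold T. unfold A.
      replace (T * (c' * M * T ^ 3 * D)) with (c' * M * T ^ 4 * D) by ring. auto. }
    assert (H2 : (E^k)^l <= exp (nu/6)).
    { unfold E. rewrite !exp_pow. apply exp_le. fold K L.
      replace (L * (K * (Gamma * dl))) with (Gamma * D) by (unfold D; ring). auto. }
    apply Rle_trans with (exp (nu/6) * exp (nu/6)).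
    apply Rmult_le_compat; auto. apply pow_le; lra. apply pow_le, pow_le; left; apply exp_pos.
    rewrite <- exp_plus. replace (nu/6 + nu/6) with (nu/3) by field. apply exp_third; auto. }
  unfold damped_return.
  apply Rle_trans with (((1+A)^t * wealth m S x t w) *
      ((E^k)^l * prodR l (fun i => prodR k (fun j => damp Gamma sigma w i j)))).
  apply Rmult_le_compat; auto.
  replace ((1 + A) ^ t * wealth m S x t w *
      ((E ^ k) ^ l * prodR l (fun i => prodR k (fun j => damp Gamma sigma w i j))))
    with (((1+A)^t * (E^k)^l) * (wealth m S x t w *
      prodR l (fun i => prodR k (fun j => damp Gamma sigma w i j)))) by ring.
  apply Rmult_le_compat_r. apply Rmult_le_pos; auto. auto.
Qed.

Theorem mainTheorem13 :
  forall (m : nat) (nu c' : R),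
    (2 <= m)%nat -> 0 < nu <= 2 -> 0 < c' ->
    exists t0 : nat,
      forall (eps c : R), 0 < eps < 1 -> 0 < c -> c' = 2 * c / eps ->
      forall (k l : nat) (sigma Gamma : R) (S : strategy),
        0 < sigma -> 2 <= Gamma ->
        is_strategy m k l S -> cond_L m k l eps S -> cond_D m k l c S ->
        forall (t : nat), (t0 <= t)%nat ->
        forall (x : nat -> nat -> R), is_market m x ->
        forall (w w' : nat -> nat -> R),
          in_param k l w -> in_param k l w' ->
          (forall i j, (i < l)%nat -> (j < k)%nat ->
             Rabs (w i j - w' i j) <= delta' nu Gamma c' m k l t) ->
          / (1 + nu) * damped_return m k l Gamma sigma S x t w
            <= damped_return m k l Gamma sigma S x t w'
          /\ damped_return m k l Gamma sigma S x t w'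
            <= (1 + nu) * damped_return m k l Gamma sigma S x t w.
Proof.
  intros m nu c' Hm Hnu Hc'.
  destruct (INR_unbounded (/ c')) as [N HN].
  exists (Datatypes.S N).
  intros eps c Heps Hc Hc'e k l sigma Gamma S HS Hsig HG HL HD t Ht x Hx w w' Hw Hw' Hww.
  assert (Ht1 : (1 <= t)%nat) by lia.
  assert (Hct : 1 <= c' * INR t).
  { assert (INR (Datatypes.S N) <= INR t) by (apply le_INR; auto).
    rewrite S_INR in H.
    apply Rle_trans with (c' * / c'). rewrite Rinv_r; lra.
    apply Rmult_le_compat_l; lra. }
  split.
  - assert (Hs : damped_return m k l Gamma sigma S x t w <=
                 (1+nu) * damped_return m k l Gamma sigma S x t w').
    { apply (one_side m nu c' eps c k l sigma Gamma S t x w' w); auto. intros i j Hi Hj. rewrite Rabs_minus_sym; auto. }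
    apply Rle_trans with (/ (1+nu) * ((1+nu) * damped_return m k l Gamma sigma S x t w')).
    apply Rmult_le_compat_l; auto. left; apply Rinv_0_lt_compat; lra.
    right. field. lra.
  - apply (one_side m nu c' eps c k l sigma Gamma S t x w w'); auto.
Qed.
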